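(* Let $\mathfrak n$ be a finite-dimensional real two-step nilpotent Lie algebra with center $\mathfrak z$, and let $n=\dim\mathfrak n-\dim\mathfrak z$. If $n\ge3$ and $2\dim[\mathfrak n,\mathfrak n]=n(n-1)$, then $\mathfrak n$ does not admit an abelian complex structure. In particular, free two-step nilpotent Lie algebras of rank $n\ge3$ (those with $\mathfrak z=[\mathfrak n,\mathfrak n]$ and $2\dim\mathfrak z=n(n-1)$) admit no abelian complex structure.
   Context: An abelian complex structure on a real Lie algebra $\mathfrak g$ is a linear map $J$ with $J^2=-\mathrm{Id}$ and $[Jx,Jy]=[x,y]$ for all $x,y\in\mathfrak g$. *)

(* Defs.v *)
From HB Require Import structures.
From mathcomp Require Import all_boot all_order all_algebra.
From mathcomp Require Import reals.
Set Implicit Arguments. Unset Strict Implicit. Unset Printing Implicit Defensive.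
Import Order.TTheory GRing.Theory Num.Theory.
Local Open Scope ring_scope.

Definition is_lie_bracket (F : fieldType) (V : vectType F) (br : V -> V -> V) : Prop :=
  [/\ (forall (a : F) (x y z : V), br (a *: x + y) z = a *: br x z + br y z),
      (forall (a : F) (x y z : V), br x (a *: y + z) = a *: br x y + br x z),
      (forall x : V, br x x = 0)
    & (forall x y z : V, br x (br y z) + br y (br z x) + br z (br x y) = 0)].

Definition two_step_nilpotent (F : fieldType) (V : vectType F) (br : V -> V -> V) : Prop :=
  (forall x y z : V, br x (br y z) = 0) /\ (exists x y : V, br x y != 0).

Definition is_center (F : fieldType) (V : vectType F) (br : V -> V -> V)
    (Z : {vspace V}) : Prop :=
  forall x : V, x \in Z <-> (forall y : V, br x y = 0).

Definition is_derived (F : fieldType) (V : vectType F) (br : V -> V -> V)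
    (D : {vspace V}) : Prop :=
  (forall x y : V, br x y \in D) /\
  (forall U : {vspace V}, (forall x y : V, br x y \in U) -> (D <= U)%VS).

Definition abelian_complex_structure (F : fieldType) (V : vectType F)
    (br : V -> V -> V) (J : 'End(V)) : Prop :=
  (forall x : V, J (J x) = - x) /\ (forall x y : V, br (J x) (J y) = br x y).

(* Main.v *)
Require Import Defs.
From HB Require Import structures.
From mathcomp Require Import all_boot all_order all_algebra.
From mathcomp Require Import reals.
From mathcomp Require Import zify ring lra.
Import Order.TTheory GRing.Theory Num.Theory.
Local Open Scope ring_scope.

Fixpoint pairs {F : fieldType} {V : vectType F} (br : V -> V -> V) (s : seq V) : seq V :=
  match s with
  | [::] => [::]
  | h :: t => [seq br h u | u <- t] ++ pairs br t
  end.

Lemma size_pairs (F : fieldType) (V : vectType F) (br : V -> V -> V) (s : seq V) :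
  (2 * size (pairs br s) = size s * (size s).-1)%N.
Proof.
elim: s => [//|h t IH] /=; rewrite size_cat size_map mulnDr IH.
case: (size t) => [|k] //= in IH *; clear IH; nia.
Qed.

Section L.
Lemma brDl {F : fieldType} {V : vectType F} {br : V -> V -> V} :
  is_lie_bracket br -> forall x y z, br (x + y) z = br x z + br y z.
Proof. rewrite /is_lie_bracket; case=> Hl _ _ _ x y z; by have := Hl 1 x y z; rewrite !scale1r. Qed.
Lemma brDr {F : fieldType} {V : vectType F} {br : V -> V -> V} :
  is_lie_bracket br -> forall x y z, br z (x + y) = br z x + br z y.
Proof. rewrite /is_lie_bracket; case=> _ Hr _ _ x y z; by have := Hr 1 z x y; rewrite !scale1r. Qed.
Lemma br0l {F : fieldType} {V : vectType F} {br : V -> V -> V} :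
  is_lie_bracket br -> forall z, br 0 z = 0.
Proof. rewrite /is_lie_bracket; by case=> Hl _ _ _ z; have := Hl (-1) 0 0 z; rewrite scaleN1r oppr0 addr0 scaleN1r addNr. Qed.
Lemma br0r {F : fieldType} {V : vectType F} {br : V -> V -> V} :
  is_lie_bracket br -> forall z, br z 0 = 0.
Proof. rewrite /is_lie_bracket; by case=> _ Hl _ _ z; have := Hl (-1) z 0 0; rewrite scaleN1r oppr0 addr0 scaleN1r addNr. Qed.
Lemma brZl {F : fieldType} {V : vectType F} {br : V -> V -> V} :
  is_lie_bracket br -> forall a x z, br (a *: x) z = a *: br x z.
Proof. move=> H a x z; have := br0l H z; move: H; rewrite /is_lie_bracket; case=> Hl _ _ _.
by move=> h; rewrite -[a *: x]addr0 Hl h addr0. Qed.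
Lemma brZr {F : fieldType} {V : vectType F} {br : V -> V -> V} :
  is_lie_bracket br -> forall a x z, br z (a *: x) = a *: br z x.
Proof. move=> H a x z; have := br0r H z; move: H; rewrite /is_lie_bracket; case=> _ Hl _ _.
by move=> h; rewrite -[a *: x]addr0 Hl h addr0. Qed.
Lemma brN {F : fieldType} {V : vectType F} {br : V -> V -> V} :
  is_lie_bracket br -> forall x y, br x y = - br y x.
Proof.
move=> H x y; have := H; rewrite /is_lie_bracket; case=> _ _ Ha _.
have := Ha (x + y); rewrite (brDl H) !(brDr H) !Ha add0r addr0.
by move/eqP; rewrite addr_eq0 => /eqP.
Qed.
Lemma brsuml {F : fieldType} {V : vectType F} {br : V -> V -> V} :
  is_lie_bracket br -> forall (I : Type) (r : seq I) (P : pred I) (G : I -> V) z,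
  br (\sum_(i <- r | P i) G i) z = \sum_(i <- r | P i) br (G i) z.
Proof.
move=> H I r P G z; apply: (big_rec2 (fun s t => br s z = t)); first exact: (br0l H).
by move=> i s t _ <-; rewrite (brDl H).
Qed.
Lemma brsumr {F : fieldType} {V : vectType F} {br : V -> V -> V} :
  is_lie_bracket br -> forall (I : Type) (r : seq I) (P : pred I) (G : I -> V) z,
  br z (\sum_(i <- r | P i) G i) = \sum_(i <- r | P i) br z (G i).
Proof.
move=> H I r P G z; apply: (big_rec2 (fun s t => br z s = t)); first exact: (br0r H).
by move=> i s t _ <-; rewrite (brDr H).
Qed.

Lemma br_span {F : fieldType} {V : vectType F} {br : V -> V -> V} (S : {vspace V})
  (X Y : seq V) : is_lie_bracket br ->
  (forall x y, x \in X -> y \in Y -> br x y \in S) ->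
  forall a b, a \in <<X>>%VS -> b \in <<Y>>%VS -> br a b \in S.
Proof.
move=> H hXY a b ha hb.
rewrite (coord_span (X := in_tuple X) ha) (brsuml H); apply: memv_suml => i _.
rewrite (brZl H); apply: memvZ.
rewrite (coord_span (X := in_tuple Y) hb) (brsumr H); apply: memv_suml => j _.
rewrite (brZr H); apply: memvZ; apply: hXY; apply: mem_nth; rewrite ?size_tuple //.
Qed.

Lemma br_pairs {F : fieldType} {V : vectType F} {br : V -> V -> V} (s : seq V) :
  is_lie_bracket br ->
  forall u v, u \in s -> v \in s -> br u v \in <<pairs br s>>%VS.
Proof.
move=> H; elim: s => [//|h t IH] u v /=; rewrite span_cat !inE.
have Hh : forall w, w \in t -> br h w \in (<<[seq br h u | u <- t]>> + <<pairs br t>>)%VS.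
  move=> w wt; apply: (subvP (addvSl _ _)); apply: memv_span; exact: map_f.
case/orP=> [/eqP->|ut]; case/orP=> [/eqP->|vt].
- by move: H; rewrite /is_lie_bracket; case=> _ _ -> _; rewrite mem0v.
- exact: Hh.
- by rewrite (brN H) memvN; apply: Hh.
- by apply: (subvP (addvSr _ _)); apply: IH.
Qed.
End L.

Lemma exists_notin {F : fieldType} {V : vectType F} (U : {vspace V}) :
  (\dim U < \dim (fullv : {vspace V}))%N -> exists x, x \notin U.
Proof.
move=> hlt; case: (boolP (all (fun v => v \in U) (vbasis fullv))) => [/allP h | /allPn [x _ hx]]; last by exists x.
have : (fullv <= U)%VS by rewrite -(span_basis (vbasisP fullv)); apply/span_subvP.
by move/dimvS; rewrite leqNgt hlt.
Qed.

Lemma dim_add_line_lt {F : fieldType} {V : vectType F} {U : {vspace V}} {v : V} :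
  v \notin U -> (\dim U < \dim (U + <[v]>)%VS)%N.
Proof.
move=> hv; rewrite ltn_neqAle dimvS ?addvSl // andbT; apply: contra hv => /eqP e.
have : U == (U + <[v]>)%VS by rewrite eqEdim addvSl -e leqnn.
by move/eqP ->; apply: (subvP (addvSr _ _)); exact: memv_line.
Qed.

Lemma dim_add_line_le {F : fieldType} {V : vectType F} (U : {vspace V}) v :
  (\dim (U + <[v]>)%VS <= (\dim U).+1)%N.
Proof.
apply: leq_trans (dimv_add_leqif U <[v]>) _; rewrite dim_vline -addn1 leq_add2l.
by case: (v != 0).
Qed.

Theorem mainTheorem14 (R : realType) (V : vectType R) (br : V -> V -> V)
    (Z D : {vspace V}) :
  is_lie_bracket br -> two_step_nilpotent br ->
  is_center br Z -> is_derived br D ->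
  (3 <= \dim (fullv : {vspace V}) - \dim Z)%N ->
  (2 * \dim D = (\dim (fullv : {vspace V}) - \dim Z) * (\dim (fullv : {vspace V}) - \dim Z - 1))%N ->
  ~ (exists J : 'End(V), abelian_complex_structure br J).
Proof.
move=> HL _ HZ [HD1 HD2] n3 HdimD [J [HJ2 HJb]].
have brZl : forall z w, z \in Z -> br z w = 0 by move=> z w /HZ.
have brZr : forall z w, z \in Z -> br w z = 0 by move=> z w hz; rewrite (brN HL) brZl ?oppr0.
have JZ : forall z, z \in Z -> J z \in Z.
  move=> z hz; apply/HZ => w.
  have -> : w = J (J (- w)) by rewrite HJ2 opprK.
  by rewrite HJb brZl.
have [x xZ] : exists x, x \notin Z by apply: exists_notin; lia.
set P1 := (Z + <[x]>)%VS.
have JxP1 : J x \notin P1.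
  apply/negP => /memv_addP [z hz [w /vlineP [c ->] hJ]].
  have e1 : - x = J z + c *: z + (c * c) *: x.
    by rewrite -HJ2 hJ linearD linearZ /= hJ scalerDr scalerA addrA.
  have e2 : (1 + c * c) *: x = - (J z + c *: z).
    have -> : J z + c *: z = - x - (c * c) *: x by rewrite e1 addrK.
    by rewrite scalerDl scale1r opprD !opprK.
  have nz : 1 + c * c != 0 by apply: lt0r_neq0; nra.
  move: xZ; have -> : x = (1 + c * c)^-1 *: ((1 + c * c) *: x) by rewrite scalerA mulVf // scale1r.
  by rewrite e2 memvZ // memvN memvD // ?JZ // memvZ.
set P2 := (P1 + <[J x]>)%VS.
have dP2 : (\dim P2 <= (\dim Z).+2)%N.
  rewrite /P2; apply: (leq_trans (dim_add_line_le P1 (J x))); rewrite ltnS /P1; exact: dim_add_line_le.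
have [y yP2] : exists y, y \notin P2 by apply: exists_notin; lia.
set P3 := (P2 + <[y]>)%VS.
have dP3 : ((\dim Z).+3 <= \dim P3)%N.
  rewrite /P3; apply: leq_trans _ (dim_add_line_lt yP2); rewrite ltnS.
  rewrite /P2; apply: leq_trans _ (dim_add_line_lt JxP1); rewrite ltnS.
  exact: (dim_add_line_lt xZ).
have dP3f : (\dim P3 <= \dim (fullv : {vspace V}))%N by apply: dimvS; apply: subvf.
set rest : seq V := vbasis (P3^C)%VS.
set e : seq V := [:: x, J x, y & rest].
have size_e : (size e <= \dim (fullv : {vspace V}) - \dim Z)%N.
  by rewrite /e /= /rest size_tuple dimv_compl; lia.
have cover : forall v, v \in (<<e>> + Z)%VS.
  have sE : forall u, u \in e -> u \in (<<e>> + Z)%VS.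
    by move=> u hu; apply: (subvP (addvSl _ _)); apply: memv_span.
  move=> v; have : v \in (P3 + P3^C)%VS by rewrite addv_complf memvf.
  apply: subvP; rewrite !subv_add -!memvE !sE ?inE ?eqxx ?orbT // addvSr /=.
  rewrite -(span_basis (vbasisP (P3^C)%VS)); apply: (subv_trans _ (addvSl _ _)).
  by apply: sub_span => u hu; rewrite /e !inE hu !orbT.
set L : seq V := br x (J x) :: [seq br x u | u <- rest] ++ br (J x) y ::
   [seq br (J x) u | u <- rest] ++ [seq br y u | u <- rest] ++ pairs br rest.
have sizeL : size (pairs br e) = (size L).+1.
  by rewrite /= !size_cat !size_map /=; lia.
have hJxL : forall v, v \in e -> br (J x) v \in <<L>>%VS.
  move=> v; rewrite /e !inE => /orP [/eqP->|/orP [/eqP->|/orP [/eqP->|hv]]].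
  - by rewrite (brN HL) memvN memv_span // inE eqxx.
  - by move: HL; rewrite /is_lie_bracket; case=> _ _ -> _; rewrite mem0v.
  - by apply: memv_span; rewrite /L !(inE, mem_cat) eqxx !orbT.
  - by apply: memv_span; rewrite /L !(inE, mem_cat) map_f ?orbT.
have hxy : br x y \in <<L>>%VS.
  rewrite -HJb; have /memv_addP [a ha [z hz ->]] := cover (J y).
  rewrite (brDr HL) (brZr _ _ hz) addr0.
  apply: (br_span _ [:: J x] e HL) => //; last exact: memv_span1.
  by move=> u w; rewrite inE => /eqP -> hw; apply: hJxL.
have pL : (<<pairs br e>> <= <<L>>)%VS.
  apply/span_subvP => w hw; have [->|ne] := eqVneq w (br x y); first exact: hxy.
  apply: memv_span; move: hw; rewrite /= !(inE, mem_cat) (negbTE ne) /=.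
  by [].
have DL : (D <= <<L>>)%VS.
  apply: HD2 => a b; apply: (subvP pL).
  have /memv_addP [a1 ha1 [z1 hz1 ->]] := cover a.
  have /memv_addP [b1 hb1 [z2 hz2 ->]] := cover b.
  rewrite (brDl HL) (brZl _ _ hz1) addr0 (brDr HL) (brZr _ _ hz2) addr0.
  exact: (br_span _ e e HL (br_pairs e HL) _ _ ha1 hb1).
have := dimvS DL; have := dim_span L; have := @size_pairs _ _ br e.
rewrite sizeL => h1 h2 h3.
have : (size e * (size e).-1 <= (\dim (fullv : {vspace V}) - \dim Z) * (\dim (fullv : {vspace V}) - \dim Z - 1))%N.
  by rewrite -subn1; apply: leq_mul => //; apply: leq_sub2r.
rewrite -HdimD -h1 => h4.
rewrite leq_pmul2l // in h4; have := leq_trans h4 (leq_trans h3 h2); by rewrite ltnn.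
Qed.
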